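(* Let $\Omega\subset\mathbb{R}$ be a bounded open interval and let $\varphi\in C^1(\overline\Omega)$ satisfy $\varphi>0$ in $\overline\Omega$. (i) For all $p>0$ and $q>0$, $$\int_\Omega\varphi^{-p}\le q^{\frac{2p}{q}}|\Omega|^{\frac{p+q}{q}}\Big\{\int_\Omega\varphi^{-q-2}\varphi_x^2\Big\}^{\frac pq}+2^{\frac{2p}{q}}|\Omega|^{p+1}\Big\{\int_\Omega\varphi\Big\}^{-p}.$$ (ii) The inequality $$-\int_\Omega\ln\varphi\le|\Omega|^{3/2}\Big\{\int_\Omega\frac{\varphi_x^2}{\varphi^2}\Big\}^{1/2}-|\Omega|\ln\Big\{\int_\Omega\varphi\Big\}+|\Omega|\ln|\Omega|$$ holds.
   Context: $|\Omega|$ denotes the length of $\Omega$. *)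

(* Defs.v *)
From Stdlib Require Import Reals.
From Coquelicot Require Import Coquelicot.
Open Scope R_scope.

(* Real power with the convention 0^y = 0 (used only for y > 0, x >= 0). *)
Definition rpow (x y : R) : R := if Rlt_dec 0 x then Rpower x y else 0.

Definition C1_closed (a b : R) (phi phi' : R -> R) : Prop :=
  (forall x, a < x < b -> is_derive phi x (phi' x)) /\
  (forall x, a <= x <= b ->
     filterlim phi (within (fun y => a <= y <= b) (locally x)) (locally (phi x)) /\
     filterlim phi' (within (fun y => a <= y <= b) (locally x)) (locally (phi' x))).

(* Main.v *)
Require Import Defs.
From Stdlib Require Import Reals Lra.
From Coquelicot Require Import Coquelicot.
Open Scope R_scope.

Ltac req := match goal with |- @eq _ ?x ?y => change (@eq R x y) end.

Definition clamp (a b x : R) := Rmax a (Rmin b x).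

Lemma clamp_in a b x : a <= b -> a <= clamp a b x <= b.
Proof. intros; unfold clamp, Rmax, Rmin; repeat destruct Rle_dec; lra. Qed.

Lemma clamp_id a b x : a <= x <= b -> clamp a b x = x.
Proof. intros; unfold clamp, Rmax, Rmin; repeat destruct Rle_dec; lra. Qed.

Lemma clamp_cont a b x : continuous (clamp a b) x.
Proof.
  apply continuity_pt_filterlim.
  intros eps Heps. exists eps; split; [lra|].
  intros y [_ Hy]. simpl in *. unfold R_dist in *.
  unfold clamp, Rmax, Rmin in *; repeat destruct Rle_dec;
  unfold Rabs in *; repeat destruct Rcase_abs; lra.
Qed.

Lemma ext_cont a b (f : R -> R) x : a <= b ->
  (forall y, a <= y <= b ->
     filterlim f (within (fun z => a <= z <= b) (locally y)) (locally (f y))) ->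
  continuous (fun y => f (clamp a b y)) x.
Proof.
  intros Hab H.
  eapply filterlim_comp; [|apply H, clamp_in, Hab].
  intros P HP. unfold within in HP.
  assert (Hc := clamp_cont a b x).
  specialize (Hc _ HP). simpl in Hc.
  unfold filtermap in *. eapply filter_imp; [|exact Hc].
  intros z Hz. apply Hz, clamp_in, Hab.
Qed.

Lemma exR f a b : (forall x, continuity_pt f x) -> ex_RInt f a b.
Proof. intros H; apply (@ex_RInt_continuous R_CompleteNormedModule); intros; apply continuity_pt_filterlim, H. Qed.

Lemma RInt_affine G al be a b : ex_RInt G a b ->
  RInt (fun t => al * G t + be) a b = al * RInt G a b + be * (b - a).
Proof.
  intros HG. apply is_RInt_unique.
  apply (@RInt_correct R_CompleteNormedModule) in HG.
  assert (H := is_RInt_plus _ _ a b _ _ (is_RInt_scal _ a b al _ HG) (is_RInt_const a b be)).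
  unfold plus, scal in H; simpl in H. unfold mult in H; simpl in H.
  replace (al * RInt G a b + be * (b - a)) with (al * RInt G a b + (b - a) * be) by ring.
  exact H.
Qed.

Lemma KL a b (f g : R -> R) : a < b -> (forall x, a < x < b -> is_derive f x (g x)) ->
  (forall x, continuity_pt g x) -> forall u v, a < u < b -> a < v < b ->
  f v - f u <= sqrt ((b - a) * RInt (fun t => g t ^ 2) a b).
Proof.
  intros Hab Hd Hc u v Hu Hv.
  set (I := RInt (fun t => g t ^ 2) a b).
  assert (cg2 : forall x, continuity_pt (fun t => g t ^ 2) x).
  { intros; apply continuity_pt_mult; [apply Hc|].
    apply continuity_pt_mult; [apply Hc| apply continuity_pt_const; intros ??; reflexivity]. }
  assert (HI : 0 <= I).
  { apply RInt_ge_0; [lra| apply exR, cg2 |]. intros; apply pow2_ge_0. }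
  assert (Hfi : RInt g u v = f v - f u).
  { apply is_RInt_unique.
    assert (H := is_RInt_derive f g u v).
    unfold minus, plus, opp in H; simpl in H. apply H.
    - intros x Hx; apply Hd. unfold Rmin, Rmax in Hx; destruct Rle_dec; lra.
    - intros; apply continuity_pt_filterlim, Hc. }
  set (m := Rmin u v). set (M := Rmax u v).
  assert (Hm : a < m <= M /\ M < b) by (unfold m, M, Rmin, Rmax; destruct Rle_dec; lra).
  assert (Habs : f v - f u <= Rabs (RInt g m M)).
  { rewrite <- Hfi. unfold m, M, Rmin, Rmax; destruct Rle_dec.
    - apply Rle_abs.
    - rewrite <- opp_RInt_swap by (apply exR, Hc). unfold opp; simpl.
      rewrite <- Rabs_Ropp. apply Rle_abs. }
  assert (Heps : forall eps, 0 < eps -> f v - f u <= (eps * I + (b - a) / eps) / 2).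
  { intros eps He.
    set (h := fun t => (eps / 2) * (g t ^ 2) + / (2 * eps)).
    assert (ch : forall x, continuity_pt h x).
    { intros; unfold h; apply continuity_pt_plus.
      - apply continuity_pt_mult; [apply continuity_pt_const; intros ??; reflexivity| apply cg2].
      - apply continuity_pt_const; intros ??; reflexivity. }
    assert (hpos : forall x, 0 <= h x).
    { intros; unfold h. assert (0 <= g x ^ 2) by apply pow2_ge_0.
      assert (0 < / (2 * eps)) by (apply Rinv_0_lt_compat; lra).
      assert (0 <= eps/2 * g x ^2) by (apply Rmult_le_pos; lra). lra. }
    eapply Rle_trans; [exact Habs|].
    eapply Rle_trans; [apply abs_RInt_le; [lra| apply exR, Hc]|].
    eapply Rle_trans.
    { apply (RInt_le _ h); [lra| |apply exR, ch|].
      - apply exR; intros; apply (continuity_pt_comp g Rabs); [apply Hc| apply Rcontinuity_abs].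
      - intros x _. unfold h. 
        assert (H1 : 0 <= (eps * Rabs (g x) - 1) ^ 2) by apply pow2_ge_0.
        assert (H2 : Rabs (g x) ^ 2 = g x ^ 2) by (rewrite RPow_abs; apply Rabs_pos_eq, pow2_ge_0).
        assert (H3: (eps * Rabs (g x) - 1) ^ 2 = eps * (eps * g x ^ 2 - 2 * Rabs (g x) + / eps))
          by (rewrite <- H2; field; lra).
        rewrite H3 in H1.
        assert (H4 : 0 <= eps * g x ^ 2 - 2 * Rabs (g x) + / eps).
        { apply (Rmult_le_reg_l eps); lra. }
        replace (/ (2 * eps)) with (/ eps / 2) by (field; lra). lra. }
    assert (Hch : RInt h a b = RInt h a m + RInt h m M + RInt h M b).
    { rewrite <- (@RInt_Chasles R_CompleteNormedModule h a m b) by (apply exR, ch).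
      rewrite <- (@RInt_Chasles R_CompleteNormedModule h m M b) by (apply exR, ch).
      unfold plus; simpl. ring. }
    assert (0 <= RInt h a m) by (apply RInt_ge_0; [lra|apply exR, ch|intros; apply hpos]).
    assert (0 <= RInt h M b) by (apply RInt_ge_0; [lra|apply exR, ch|intros; apply hpos]).
    assert (Hval : RInt h a b = (eps * I + (b - a) / eps) / 2).
    { unfold h. rewrite RInt_affine by (apply exR, cg2). unfold I. generalize (RInt (fun t : R => g t ^ 2) a b); intros J. change (@eq R (eps / 2 * J + / (2 * eps) * (b - a)) ((eps * J + (b - a) / eps) / 2)). field. lra. }
    lra. }
  set (D := f v - f u). fold D in Heps.
  destruct (Rle_or_lt D 0) as [HD|HD].
  { eapply Rle_trans; [exact HD| apply sqrt_pos]. }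
  destruct (Req_dec I 0) as [HI0|HI0].
  - exfalso. specialize (Heps ((b - a) / D)).
    rewrite HI0 in Heps.
    assert (0 < (b - a) / D) by (apply Rdiv_lt_0_compat; lra).
    replace ((b - a) / ((b - a) / D)) with D in Heps by (field; lra).
    assert (D <= ((b - a) / D * 0 + D) / 2) by (apply Heps; auto). lra.
  - specialize (Heps (D / I)).
    assert (0 < D / I) by (apply Rdiv_lt_0_compat; lra).
    assert (H1 : D <= (D + (b - a) * I / D) / 2).
    { replace ((b - a) * I / D) with ((b - a) / (D / I)) by (field; lra).
      replace D with (D / I * I) at 2 by (field; lra). apply Heps; auto. }
    assert (H2 : D * D <= (b - a) * I).
    { assert (H5 : D <= (b - a) * I / D) by lra.
      apply (Rmult_le_compat_l D) in H5; [|lra].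
      replace (D * ((b - a) * I / D)) with ((b - a) * I) in H5 by (field; lra). exact H5. }
    rewrite <- (sqrt_square D) by lra. apply sqrt_le_1_alt. exact H2.
Qed.

Lemma closure_le (h : R -> R) a b C u : a < b -> continuity_pt h u -> a <= u <= b ->
  (forall u', a < u' < b -> h u' <= C) -> h u <= C.
Proof.
  intros Hab Hc Hu H.
  destruct (Rle_or_lt (h u) C) as [|Hlt]; [assumption|exfalso].
  destruct (Hc (h u - C)) as [d [Hd Hd']]; [lra|].
  set (s := Rmin d (b - a) / 2).
  assert (Hs : 0 < s /\ s < d /\ s < b - a)
    by (unfold s, Rmin; destruct Rle_dec; lra).
  assert (Hex : exists u', a < u' < b /\ u' <> u /\ Rabs (u' - u) < d).
  { destruct (Req_dec u a) as [->|Hna].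
    - exists (a + s). split; [lra|]. split; [lra|].
      rewrite Rabs_right; lra.
    - destruct (Req_dec u b) as [->|Hnb].
      + exists (b - s). split; [lra|]. split; [lra|].
        rewrite Rabs_left; lra.
      + assert (a < u < b) by lra. specialize (H u H0). lra. }
  destruct Hex as [u' [Hu' [Hne Hd2]]].
  assert (Hh := Hd' u'). simpl in Hh. unfold R_dist in Hh.
  assert (Rabs (h u' - h u) < h u - C).
  { apply Hh. split; [split; [exact I| auto]| exact Hd2]. }
  specialize (H u' Hu'). unfold Rabs in H0. destruct Rcase_abs in H0; lra.
Qed.

Lemma Rpower_pos x y : 0 < Rpower x y.
Proof. apply exp_pos. Qed.

Lemma rpow_ge0 x y : 0 <= rpow x y.
Proof. unfold rpow; destruct Rlt_dec; [left; apply Rpower_pos| lra]. Qed.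

Lemma sum_pow A B r : 0 < A -> 0 <= B -> 0 < r ->
  Rpower (A + B) r <= Rpower 2 r * (Rpower A r + rpow B r).
Proof.
  intros HA HB Hr.
  assert (H0 := rpow_ge0 B r). assert (H1 := Rpower_pos A r).
  assert (H2 := Rpower_pos 2 r).
  destruct (Rle_or_lt B A).
  - eapply Rle_trans; [apply Rle_Rpower_l with (b := 2 * A); lra|].
    rewrite <- Rpower_mult_distr by lra. nra.
  - eapply Rle_trans; [apply Rle_Rpower_l with (b := 2 * B); lra|].
    rewrite <- Rpower_mult_distr by lra.
    unfold rpow; destruct Rlt_dec; [|lra]. nra.
Qed.

Lemma cont_Rpower y c : 0 < y -> continuity_pt (fun t => Rpower t c) y.
Proof.
  intros Hy. apply derivable_continuous_pt. exists (c * Rpower y (c - 1)).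
  apply derivable_pt_lim_power; auto.
Qed.

Lemma cont_ln y : 0 < y -> continuity_pt ln y.
Proof.
  intros Hy. apply derivable_continuous_pt. exists (/ y).
  apply derivable_pt_lim_ln; auto.
Qed.

Theorem lemma5p1 (a b : R) (phi phi' : R -> R) :
  a < b ->
  C1_closed a b phi phi' ->
  (forall x, a <= x <= b -> 0 < phi x) ->
  (forall p q : R, 0 < p -> 0 < q ->
     RInt (fun x => Rpower (phi x) (- p)) a b <=
       Rpower q (2 * p / q) * Rpower (b - a) ((p + q) / q) *
         rpow (RInt (fun x => Rpower (phi x) (- q - 2) * (phi' x) ^ 2) a b) (p / q)
       + Rpower 2 (2 * p / q) * Rpower (b - a) (p + 1) *
         Rpower (RInt phi a b) (- p))
  /\
  (- RInt (fun x => ln (phi x)) a b <=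
     Rpower (b - a) (3 / 2) *
       sqrt (RInt (fun x => (phi' x) ^ 2 / (phi x) ^ 2) a b)
     - (b - a) * ln (RInt phi a b) + (b - a) * ln (b - a)).
Proof.
  intros Hab [Hd Hcont] Hpos.
  set (L := b - a).
  assert (HL : 0 < L) by (unfold L; lra).
  set (pe := fun x => phi (clamp a b x)).
  set (pe' := fun x => phi' (clamp a b x)).
  assert (cpe : forall x, continuity_pt pe x).
  { intros x; apply continuity_pt_filterlim, ext_cont; [lra|]. intros; apply Hcont; auto. }
  assert (cpe' : forall x, continuity_pt pe' x).
  { intros x; apply continuity_pt_filterlim, ext_cont; [lra|]. intros; apply Hcont; auto. }
  assert (ppe : forall x, 0 < pe x).
  { intros; apply Hpos, clamp_in; lra. }
  assert (epe : forall x, a <= x <= b -> pe x = phi x).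
  { intros; unfold pe; rewrite clamp_id; auto. }
  assert (epe' : forall x, a <= x <= b -> pe' x = phi' x).
  { intros; unfold pe'; rewrite clamp_id; auto. }
  assert (dpe : forall x, a < x < b -> is_derive pe x (pe' x)).
  { intros x Hx. rewrite epe' by lra.
    apply is_derive_ext_loc with (f := phi); [|apply Hd; auto].
    assert (Hr : 0 < Rmin (x - a) (b - x)) by (unfold Rmin; destruct Rle_dec; lra).
    exists (mkposreal _ Hr). intros y Hy. simpl in Hy.
    unfold ball in Hy; simpl in Hy; unfold AbsRing_ball, abs, minus, plus, opp in Hy; simpl in Hy.
    symmetry; apply epe.
    unfold Rmin in Hy; destruct Rle_dec; unfold Rabs in Hy; destruct Rcase_abs in Hy; lra. }
  assert (Hmm : forall x, Rmin a b < x < Rmax a b -> a <= x <= b).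
  { intros x; rewrite Rmin_left, Rmax_right; lra. }
  destruct (continuity_ab_maj pe a b) as [x0 [Hx0 Hx0ab]]; [lra| intros; apply cpe|].
  destruct (continuity_ab_min pe a b) as [x1 [Hx1 Hx1ab]]; [lra| intros; apply cpe|].
  destruct (ex_intro (fun y : R => y = RInt pe a b) _ eq_refl) as [P EP].
  assert (HP : RInt phi a b = P).
  { rewrite EP; symmetry; apply RInt_ext; intros; apply epe, Hmm; auto. }
  assert (HPle : P <= L * pe x0).
  { rewrite EP. eapply Rle_trans.
    - apply (RInt_le pe (fun _ => pe x0)); [lra| apply exR, cpe| apply exR; intros; apply continuity_pt_const; intros ??; reflexivity|].
      intros; apply Hx0; lra.
    - rewrite RInt_const. unfold scal; simpl; unfold mult; simpl. unfold L; lra. }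
  assert (HPpos : 0 < P).
  { apply Rlt_le_trans with (L * pe x1); [apply Rmult_lt_0_compat; auto|].
    rewrite EP. eapply Rle_trans.
    2: { apply (RInt_le (fun _ => pe x1) pe); [lra| apply exR; intros; apply continuity_pt_const; intros ??; reflexivity| apply exR, cpe|].
      intros; apply Hx1; lra. }
    rewrite RInt_const. unfold scal; simpl; unfold mult; simpl. unfold L; lra. }
  assert (Hmean : 0 < P / L <= pe x0).
  { split; [apply Rdiv_lt_0_compat; auto|]. apply (Rmult_le_reg_l L); auto.
    replace (L * (P / L)) with P by (field; lra). auto. }
  split.
  2: {
  set (psi := fun x => - ln (pe x)).
  set (g := fun x => - (pe' x / pe x)).
  assert (cg : forall x, continuity_pt g x).
  { intros; unfold g; apply continuity_pt_opp, continuity_pt_div; auto. apply Rgt_not_eq, ppe. }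
  assert (cpsi : forall x, continuity_pt psi x).
  { intros; unfold psi; apply continuity_pt_opp.
    apply (continuity_pt_comp pe ln); auto. apply cont_ln, ppe. }
  assert (dpsi : forall x, a < x < b -> is_derive psi x (g x)).
  { intros x Hx.
    assert (H1 := is_derive_comp ln pe x _ _ (is_derive_ln _ (ppe x)) (dpe x Hx)).
    assert (H2 := is_derive_opp _ _ _ H1).
    replace (g x) with (opp (scal (pe' x) (/ pe x))); [exact H2|].
    unfold g, opp, scal; simpl; unfold mult; simpl. req. field. apply Rgt_not_eq, ppe. }
  destruct (ex_intro (fun y : R => y = RInt (fun t => g t ^ 2) a b) _ eq_refl) as [K EK].
  assert (Hpt : forall x, a < x < b -> psi x <= psi x0 + sqrt (L * K)).
  { intros x Hx.
    assert (H := closure_le (fun u => psi x - psi u) a b (sqrt (L * K)) x0 Hab).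
    cut (psi x - psi x0 <= sqrt (L * K)); [lra|].
    apply H; auto.
    - apply continuity_pt_minus; [apply continuity_pt_const; intros ??; reflexivity| apply cpsi].
    - intros u' Hu'. rewrite EK. unfold L. apply KL; auto. }
  assert (Hx0b : psi x0 <= - ln P + ln L).
  { unfold psi. assert (ln (P / L) <= ln (pe x0)) by (apply ln_le; lra).
    unfold Rdiv in H; rewrite ln_mult, ln_Rinv in H; try lra.
    apply Rinv_0_lt_compat; lra. }
  assert (HK : K = RInt (fun x => (phi' x) ^ 2 / (phi x) ^ 2) a b).
  { rewrite EK. apply RInt_ext. intros x Hx. apply Hmm in Hx.
    unfold g. rewrite epe, epe' by auto. req. field. apply Rgt_not_eq, Hpos; auto. }
  destruct (ex_intro (fun y : R => y = RInt psi a b) _ eq_refl) as [Q EQ].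
  assert (HQ : - RInt (fun x => ln (phi x)) a b = Q).
  { rewrite EQ. unfold psi.
    rewrite (RInt_opp (fun x => ln (pe x))).
    2: { apply exR; intros; apply (continuity_pt_comp pe ln); auto. apply cont_ln, ppe. }
    unfold opp; simpl. f_equal. apply RInt_ext. intros x Hx. rewrite epe; auto. }
  assert (HK0 : 0 <= K).
  { rewrite EK; apply RInt_ge_0; [lra| |intros; apply pow2_ge_0].
    apply exR; intros; apply continuity_pt_mult; [apply cg| apply continuity_pt_mult; [apply cg| apply continuity_pt_const; intros ??; reflexivity]]. }
  assert (HQle : Q <= L * (- ln P + ln L + sqrt (L * K))).
  { rewrite EQ. eapply Rle_trans.
    - apply (RInt_le psi (fun _ => - ln P + ln L + sqrt (L * K))); [lra| apply exR, cpsi| apply exR; intros; apply continuity_pt_const; intros ??; reflexivity|].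
      intros x Hx. specialize (Hpt x Hx). lra.
    - rewrite RInt_const. unfold scal; simpl; unfold mult; simpl. unfold L; lra. }
  rewrite HQ, HP, <- HK.
  replace (Rpower L (3 / 2)) with (L * sqrt L).
  2: { replace (3 / 2) with (1 + / 2) by field. rewrite Rpower_plus, Rpower_1, Rpower_sqrt; auto. }
  rewrite sqrt_mult_alt in HQle by lra. lra. }
  intros p q Hp Hq.
  set (psi := fun x => Rpower (pe x) (- q / 2)).
  set (g := fun x => (- q / 2) * Rpower (pe x) (- q / 2 - 1) * pe' x).
  assert (cg : forall x, continuity_pt g x).
  { intros; unfold g; apply continuity_pt_mult; [apply continuity_pt_mult|apply cpe'].
    - apply continuity_pt_const; intros ??; reflexivity.
    - apply (continuity_pt_comp pe (fun t => Rpower t (- q / 2 - 1))); auto. apply cont_Rpower, ppe. }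
  assert (cpsi : forall x, continuity_pt psi x).
  { intros; unfold psi. apply (continuity_pt_comp pe (fun t => Rpower t (- q / 2))); auto. apply cont_Rpower, ppe. }
  assert (dpsi : forall x, a < x < b -> is_derive psi x (g x)).
  { intros x Hx.
    assert (H0 : is_derive (fun t => Rpower t (- q / 2)) (pe x) (- q / 2 * Rpower (pe x) (- q / 2 - 1))).
    { apply is_derive_Reals, derivable_pt_lim_power, ppe. }
    assert (H1 := is_derive_comp _ pe x _ _ H0 (dpe x Hx)).
    replace (g x) with (scal (pe' x) (- q / 2 * Rpower (pe x) (- q / 2 - 1))); [exact H1|].
    unfold g, scal; simpl; unfold mult; simpl. req. ring. }
  destruct (ex_intro (fun y : R => y = RInt (fun t => g t ^ 2) a b) _ eq_refl) as [K EK].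
  destruct (ex_intro (fun y : R => y = RInt (fun t => Rpower (pe t) (- q - 2) * pe' t ^ 2) a b) _ eq_refl) as [J EJ].
  assert (cJ : forall x, continuity_pt (fun t => Rpower (pe t) (- q - 2) * pe' t ^ 2) x).
  { intros; apply continuity_pt_mult.
    - apply (continuity_pt_comp pe (fun t => Rpower t (- q - 2))); auto. apply cont_Rpower, ppe.
    - apply continuity_pt_mult; [apply cpe'| apply continuity_pt_mult; [apply cpe'| apply continuity_pt_const; intros ??; reflexivity]]. }
  assert (HJ : RInt (fun x => Rpower (phi x) (- q - 2) * (phi' x) ^ 2) a b = J).
  { rewrite EJ. apply RInt_ext. intros x Hx. apply Hmm in Hx. rewrite epe, epe' by auto. reflexivity. }
  assert (HJ0 : 0 <= J).
  { rewrite EJ; apply RInt_ge_0; [lra| apply exR, cJ|].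
    intros; apply Rmult_le_pos; [left; apply Rpower_pos| apply pow2_ge_0]. }
  assert (HKJ : K = q ^ 2 / 4 * J).
  { rewrite EK, EJ.
    rewrite <- (RInt_scal (fun t => Rpower (pe t) (- q - 2) * pe' t ^ 2)) by (apply exR, cJ).
    apply RInt_ext. intros x _. unfold g, scal; simpl; unfold mult; simpl.
    replace (- q - 2) with ((- q / 2 - 1) + (- q / 2 - 1)) by field.
    rewrite Rpower_plus. req. field. }
  assert (HK0 : 0 <= K) by (rewrite HKJ; apply Rmult_le_pos; [|auto]; apply Rmult_le_pos; [apply pow2_ge_0|lra]).
  set (B := sqrt (L * K)).
  assert (HB0 : 0 <= B) by apply sqrt_pos.
  assert (Hpt : forall x, a < x < b -> psi x <= psi x0 + B).
  { intros x Hx.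
    assert (H := closure_le (fun u => psi x - psi u) a b B x0 Hab).
    cut (psi x - psi x0 <= B); [lra|].
    apply H; auto.
    - apply continuity_pt_minus; [apply continuity_pt_const; intros ??; reflexivity| apply cpsi].
    - intros u' Hu'. unfold B. rewrite EK. unfold L. apply KL; auto. }
  assert (Hx0b : Rpower (psi x0) (2 * p / q) <= Rpower L p * Rpower P (- p)).
  { unfold psi. rewrite Rpower_mult. replace (- q / 2 * (2 * p / q)) with (- p) by (field; lra).
    rewrite !Rpower_Ropp.
    replace (Rpower L p * / Rpower P p) with (/ Rpower (P / L) p).
    2: { unfold Rdiv. rewrite <- Rpower_mult_distr by (try apply Rinv_0_lt_compat; lra).
         replace (Rpower (/ L) p) with (/ Rpower L p) by (unfold Rpower; rewrite ln_Rinv by lra; rewrite <- exp_Ropp; f_equal; ring).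
         assert (0 < Rpower P p) by apply Rpower_pos.
         assert (0 < Rpower L p) by apply Rpower_pos. field. lra. }
    apply Rinv_le_contravar; [apply Rpower_pos|].
    apply Rle_Rpower_l; lra. }
  set (Cst := Rpower 2 (2 * p / q) * (Rpower L p * Rpower P (- p) + rpow B (2 * p / q))).
  assert (Hptw : forall x, a < x < b -> Rpower (pe x) (- p) <= Cst).
  { intros x Hx.
    replace (Rpower (pe x) (- p)) with (Rpower (psi x) (2 * p / q)).
    2: { unfold psi. rewrite Rpower_mult. f_equal. field. lra. }
    assert (Hr : 0 < 2 * p / q) by (apply Rdiv_lt_0_compat; lra).
    eapply Rle_trans; [apply Rle_Rpower_l with (b := psi x0 + B); [lra| split; [apply Rpower_pos| apply Hpt; auto]]|].
    eapply Rle_trans; [apply sum_pow; auto; apply Rpower_pos|].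
    unfold Cst. apply Rmult_le_compat_l; [left; apply Rpower_pos|]. lra. }
  destruct (ex_intro (fun y : R => y = RInt (fun t => Rpower (pe t) (- p)) a b) _ eq_refl) as [Q EQ].
  assert (HQ : RInt (fun x => Rpower (phi x) (- p)) a b = Q).
  { rewrite EQ. apply RInt_ext. intros x Hx. apply Hmm in Hx. rewrite epe by auto. reflexivity. }
  assert (HQle : Q <= L * Cst).
  { rewrite EQ. eapply Rle_trans.
    - apply (RInt_le _ (fun _ => Cst)); [lra| | apply exR; intros; apply continuity_pt_const; intros ??; reflexivity|].
      + apply exR; intros; apply (continuity_pt_comp pe (fun t => Rpower t (- p))); auto. apply cont_Rpower, ppe.
      + exact Hptw.
    - rewrite RInt_const. unfold scal; simpl; unfold mult; simpl. unfold L; lra. }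
  rewrite HQ, HJ, HP.
  assert (E1 : Rpower L (p + 1) = Rpower L p * L) by (rewrite Rpower_plus, Rpower_1; auto).
  assert (E2 : L * Rpower 2 (2 * p / q) * rpow B (2 * p / q) =
               Rpower q (2 * p / q) * Rpower L ((p + q) / q) * rpow J (p / q)).
  { destruct (Req_dec J 0) as [HJz|HJz].
    - assert (B = 0) by (unfold B; rewrite HKJ, HJz, Rmult_0_r, Rmult_0_r; apply sqrt_0).
      rewrite H, HJz. unfold rpow; destruct Rlt_dec; [lra|]. ring.
    - assert (HJp : 0 < J) by lra.
      assert (HX : 0 < L * (q ^ 2 / 4 * J)) by (apply Rmult_lt_0_compat; auto; apply Rmult_lt_0_compat; auto; nra).
      assert (HBp : 0 < B) by (unfold B; rewrite HKJ; apply sqrt_lt_R0; auto).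
      unfold rpow. destruct (Rlt_dec 0 B); [|lra]. destruct (Rlt_dec 0 J); [|lra].
      unfold B. rewrite HKJ, <- Rpower_sqrt, Rpower_mult by auto.
      replace (/ 2 * (2 * p / q)) with (p / q) by (field; lra).
      rewrite <- !Rpower_mult_distr by (auto; nra).
      replace (q ^ 2 / 4) with (Rpower (q / 2) (INR 2)) by (rewrite Rpower_pow by lra; field).
      rewrite Rpower_mult. replace (INR 2 * (p / q)) with (2 * p / q) by (simpl; field; lra).
      replace ((p + q) / q) with (p / q + 1) by (field; lra).
      rewrite Rpower_plus, Rpower_1 by auto.
      replace (Rpower q (2 * p / q)) with (Rpower 2 (2 * p / q) * Rpower (q / 2) (2 * p / q)).
      2: { rewrite Rpower_mult_distr by lra. f_equal. field. }
      ring. }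
  assert (Efin : L * Cst = Rpower q (2 * p / q) * Rpower L ((p + q) / q) * rpow J (p / q) +
        Rpower 2 (2 * p / q) * Rpower L (p + 1) * Rpower P (- p)).
  { rewrite <- E2, E1. unfold Cst. ring. }
  lra.
Qed.
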